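(* Let $\Gamma$ be a valued structure with finite signature $\tau$ and domain $C$, let $\Delta$ be a valued $\tau$-structure with finite domain $D$ such that there is a fractional homomorphism from $\Delta$ to $\Gamma$, and let $m\ge2$ be an integer. If $\Gamma$ has an $m$-ary fully symmetric fractional polymorphism, then there is a fractional homomorphism from $\mathcal{P}^m(\Delta)$ to $\Gamma$.
   Context: A valued structure consists of a signature $\tau$ of function symbols with arities, a domain, and for each $f\in\tau$ a cost function from the domain to the power $\mathrm{ar}(f)$ into $\mathbb{Q}\cup\{+\infty\}$. A fractional homomorphism from a valued $\tau$-structure $\Delta$ (domain $D$) to $\Gamma$ (domain $C$) is a map $\omega\colon C^D\to\mathbb{Q}_{\ge0}$ with finite support and $\sum_g\omega(g)=1$ such that $\sum_g\omega(g)f^\Gamma(g(a))\le f^\Delta(a)$ for all $f\in\tau$, $a\in D^{\mathrm{ar}(f)}$ ($g$ applied componentwise). An $m$-ary fractional polymorphism of $\Gamma$ is a map $\omega$ from operations $C^m\to C$ to $\mathbb{Q}_{\ge0}$ with finite support, $\sum_g\omega(g)=1$, and $\sum_g\omega(g)f^\Gamma(g(a^1,\dots,a^m))\le\frac1m\sum_{i=1}^m f^\Gamma(a^i)$ for all $f\in\tau$, $a^1,\dots,a^m\in C^{\mathrm{ar}(f)}$. It is fully symmetric if every operation in its support satisfies $g(x_1,\dots,x_m)=g(x_{\pi(1)},\dots,x_{\pi(m)})$ for all permutations $\pi$. The multiset structure $\mathcal{P}^m(\Delta)$ is the valued $\tau$-structure whose domain is the set of multisets of size $m$ of elements of $D$,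 with, for $k$-ary $f\in\tau$ and multisets $\alpha_1,\dots,\alpha_k$, $f^{\mathcal{P}^m(\Delta)}(\alpha_1,\dots,\alpha_k)=\frac1m\min\sum_{i=1}^m f^\Delta(t^1_i,\dots,t^k_i)$, the minimum over all $t^1,\dots,t^k\in D^m$ such that the multiset of coordinates of $t^l$ is $\alpha_l$ for each $l$. *)

(* Defs.v *)
(* valued structures with costs in Q ∪ {+oo}, encoded in \bar rat. *)
From Stdlib Require List.
From mathcomp Require Import all_boot all_order all_algebra all_fingroup.
From mathcomp Require Import constructive_ereal.
Set Implicit Arguments. Unset Strict Implicit. Unset Printing Implicit Defensive.
Import Order.TTheory GRing.Theory Num.Theory.
Local Open Scope ring_scope.
Local Open Scope ereal_scope.

Section Valued.
Variables (S : finType) (ar : S -> nat).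

Definition costs (T : Type) := forall f : S, (ar f).-tuple T -> \bar rat.

Definition valued_costs (T : Type) (c : costs T) : Prop :=
  forall f t, c f t != -oo.

(* A fractional homomorphism from (D, cD) to (C, cC), given as a finite list of
   weighted maps D -> C (the finitely supported map omega). *)
Definition frac_hom (D : finType) (C : Type) (cD : costs D) (cC : costs C)
    (w : seq (rat * (D -> C))) : Prop :=
  [/\ List.Forall (fun p => (0 <= p.1)%R) w,
      (\sum_(p <- w) p.1)%R = 1%R &
      forall (f : S) (a : (ar f).-tuple D),
        \sum_(p <- w) ((p.1)%:E * cC f (map_tuple p.2 a)) <= cD f a].

Definition exists_frac_hom (D : finType) (C : Type) (cD : costs D) (cC : costs C) :=
  exists w, frac_hom cD cC w.

Definition frac_pol (m : nat) (C : Type) (cC : costs C)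
    (w : seq (rat * (('I_m -> C) -> C))) : Prop :=
  [/\ List.Forall (fun p => (0 <= p.1)%R) w,
      (\sum_(p <- w) p.1)%R = 1%R &
      forall (f : S) (a : 'I_m -> (ar f).-tuple C),
        \sum_(p <- w) ((p.1)%:E * cC f [tuple p.2 (fun i => tnth (a i) j) | j < ar f])
        <= ((m%:R)^-1)%:E * \sum_(i < m) cC f (a i)].

Definition fully_symmetric (m : nat) (C : Type) (w : seq (rat * (('I_m -> C) -> C))) :=
  List.Forall (fun p => (0 < p.1)%R ->
     forall (x : 'I_m -> C) (s : 'S_m), p.2 x = p.2 (x \o s)) w.

Definition has_fs_frac_pol (m : nat) (C : Type) (cC : costs C) :=
  exists w : seq (rat * (('I_m -> C) -> C)), frac_pol cC w /\ fully_symmetric w.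

Definition mset (D : finType) (m : nat) :=
  {mu : {ffun D -> 'I_m.+1} | (\sum_(d : D) (mu d : nat))%N == m}.

Definition mult (D : finType) (m : nat) (al : mset D m) (d : D) : nat :=
  nat_of_ord (sval al d).

Definition Pm_cost (D : finType) (cD : costs D) (m : nat) : costs (mset D m) :=
  fun f al =>
    ((m%:R)^-1)%:E *
    \big[Order.min/+oo]_(t : (ar f).-tuple (m.-tuple D) |
         [forall l, forall d, count_mem d (tnth t l) == mult (tnth al l) d])
       \sum_(i < m) cD f [tuple tnth (tnth t j) i | j < ar f].

End Valued.

(* Main.v *)
Require Import Defs.
From mathcomp Require Import all_boot all_order all_algebra all_fingroup.
From mathcomp Require Import constructive_ereal.
From Stdlib Require Import FunctionalExtensionality.
Set Implicit Arguments. Unset Strict Implicit. Unset Printing Implicit Defensive.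
Import Order.TTheory GRing.Theory Num.Theory.

Section Helpers.
Local Open Scope ring_scope.
Local Open Scope ereal_scope.
Variable R : realDomainType.

Lemma sum_In_le (T : Type) (s : seq T) (F G : T -> \bar R) :
  (forall x, List.In x s -> F x <= G x) -> \sum_(x <- s) F x <= \sum_(x <- s) G x.
Proof.
elim: s => [|y s IH] H; first by rewrite !big_nil.
rewrite !big_cons; apply: leeD; first by apply: H; left.
by apply: IH => x Hx; apply: H; right.
Qed.

Lemma sum_In_eq (T : Type) (s : seq T) (F G : T -> \bar R) :
  (forall x, List.In x s -> F x = G x) -> \sum_(x <- s) F x = \sum_(x <- s) G x.
Proof.
elim: s => [|y s IH] H; first by rewrite !big_nil.
rewrite !big_cons H; last by left.
by rewrite IH // => x Hx; apply: H; right.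
Qed.

Lemma sum_In_ninf (T : Type) (s : seq T) (F : T -> \bar R) :
  (forall x, List.In x s -> F x != -oo) -> \sum_(x <- s) F x != -oo.
Proof.
elim: s => [|y s IH] H; first by rewrite !big_nil.
rewrite !big_cons adde_eq_ninfty negb_or H; last by left.
by rewrite IH // => x Hx; apply: H; right.
Qed.

Lemma sumeZ (T : Type) (s : seq T) (c : R) (F : T -> \bar R) :
  (forall x, List.In x s -> F x != -oo) ->
  c%:E * \sum_(x <- s) F x = \sum_(x <- s) c%:E * F x.
Proof.
elim: s => [|y s IH] H; first by rewrite !big_nil mule0.
have Hs : forall x, List.In x s -> F x != -oo by move=> x Hx; apply: H; right.
rewrite !big_cons muleDr //; first by rewrite IH.
have Hy : F y != -oo by apply: H; left.
have Hs' := sum_In_ninf Hs.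
by rewrite /adde_def (negbTE Hy) (negbTE Hs') !andbF.
Qed.

Lemma mul_ninf (c : R) (x : \bar R) : (0 <= c)%R -> x != -oo -> c%:E * x != -oo.
Proof.
move=> c0 hx; rewrite mule_eq_ninfty negb_or; apply/andP; split.
  by rewrite (negbTE hx) andbF.
rewrite !negb_or; apply/and3P; split => //.
by rewrite lte_fin ltNge c0.
Qed.

Lemma Forall_cat (A : Type) (P : A -> Prop) (s t : seq A) :
  List.Forall P s -> List.Forall P t -> List.Forall P (s ++ t).
Proof. by move=> Hs Ht; elim: Hs => //= x s' Px _ IH; constructor. Qed.

Lemma Forall_allpairs (A B Cc : Type) (P : A -> Prop) (Q : B -> Prop) (Rr : Cc -> Prop)
  (f : A -> B -> Cc) s t :
  List.Forall P s -> List.Forall Q t -> (forall x y, P x -> Q y -> Rr (f x y)) ->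
  List.Forall Rr [seq f x y | x <- s, y <- t].
Proof.
move=> Hs Ht H; elim: Hs => [|x s' Px _ IH]; first by [].
rewrite allpairs_cons; apply: Forall_cat => //.
elim: Ht {IH} => [|y t' Qy _ IH'] //=.
by constructor => //; apply: H.
Qed.

End Helpers.

Local Open Scope ring_scope.
Local Open Scope ereal_scope.

Theorem lemma9 (S : finType) (ar : S -> nat)
    (C : Type) (cC : costs ar C) (D : finType) (cD : costs ar D) (m : nat) :
  valued_costs cC -> valued_costs cD -> (2 <= m)%N ->
  exists_frac_hom cD cC ->
  has_fs_frac_pol m cC ->
  exists_frac_hom (@Pm_cost S ar D cD m) cC.
Proof.
move=> vC vD m2 [w [w0 w1 wH]] [u [[u0 u1 uH] usym]].
have d0of : mset D m -> D.
  move=> al; case: (pickP (fun d => (0 < mult al d)%N)) => [d _|H]; first exact d.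
  exfalso; have := svalP al; rewrite big1 => [|d _]; first by move/eqP=> hm; rewrite -hm in m2.
  by have := H d; rewrite /= /mult; case: (sval al d) => -[].
pose enumt (al : mset D m) : m.-tuple D :=
  odflt (nseq_tuple m (d0of al))
    [pick t : m.-tuple D | [forall d, count_mem d t == mult al d]].
pose h (g : D -> C) (p : ('I_m -> C) -> C) (al : mset D m) :=
  p (fun i => g (tnth (enumt al) i)).
exists [seq (pw.1 * pu.1, h pw.2 pu.2)%R | pw <- w, pu <- u]; split.
- apply: (Forall_allpairs w0 u0) => x y /= hx hy; exact: mulr_ge0.
- rewrite big_allpairs_dep /=.
  under eq_bigr do rewrite -big_distrr /= u1 mulr1.
  exact: w1.
move=> f al.
have c0 : (0 <= (m%:R)^-1 :> rat)%R by rewrite invr_ge0 ler0n.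
have c0' : (0 < (m%:R)^-1 :> rat)%R by rewrite invr_gt0 ltr0n; exact: leq_trans m2.
rewrite /Pm_cost.
apply: (big_ind (fun v => _ <= ((m%:R)^-1)%:E * v)).
- by rewrite gt0_muley ?lte_fin // leey.
- move=> x y hx hy; rewrite /Order.min; case: ifP => //.
  idtac.
move=> t /forallP Ht.
have usym' := proj1 (List.Forall_forall _ _) usym.
have u0' := proj1 (List.Forall_forall _ _) u0.
have w0' := proj1 (List.Forall_forall _ _) w0.
have key : forall l g p, List.In p u -> (0 < p.1)%R ->
    h g p.2 (tnth al l) = p.2 (fun i => g (tnth (tnth t l) i)).
  move=> l g p pin ppos; rewrite /h /enumt.
  case: pickP => [t' Ht'|H]; last first.
    by exfalso; have := H (tnth t l); rewrite /= Ht.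
  have pe : perm_eq (tnth t l) t'.
    apply/allP => x _; move/forallP: Ht' => Ht'; move/forallP: (Ht l) => Hl.
    by rewrite /= (eqP (Ht' x)) (eqP (Hl x)).
  case/tuple_permP: pe => s hs.
  have hs' : tnth t l = [tuple tnth t' (s i) | i < m] by apply: val_inj.
  rewrite /= (usym' p pin ppos (fun i => g (tnth t' i)) s).
  congr (p.2 _); apply: functional_extensionality => i.
  by rewrite /= hs' tnth_mktuple.
pose col i := [tuple tnth (tnth t j) i | j < ar f].
pose a (g : D -> C) i := map_tuple g (col i).
rewrite big_allpairs_dep /=.
apply: (@le_trans _ _ (\sum_(pw <- w) (pw.1)%:E * (((m%:R)^-1)%:E * \sum_(i < m) cC f (a pw.2 i)))).
- rewrite [leLHS](_ : _ = \sum_(pw <- w) (pw.1)%:E * \sum_(pu <- u) (pu.1)%:E *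
      cC f [tuple pu.2 (fun i => tnth (a pw.2 i) j) | j < ar f]).
  + apply: sum_In_le => pw pwin; apply: lee_wpmul2l; first by rewrite lee_fin w0'.
    exact: uH.
  + apply: eq_bigr => pw _; rewrite sumeZ; last first.
      by move=> pu puin; apply: mul_ninf; [exact: u0' | exact: vC].
    apply: sum_In_eq => -[r p] pin /=; rewrite EFinM -muleA.
    have [->|rn0] := eqVneq r 0%R; first by rewrite !mul0e mule0.
    have rpos : (0 < r)%R by rewrite lt_def rn0 (u0' _ pin).
    congr (_ * (_ * cC f _)); apply: eq_from_tnth => j.
    rewrite tnth_map tnth_mktuple (key j _ (r, p) pin rpos) /=.
    congr (p _); apply: functional_extensionality => i.
    by rewrite /a tnth_map tnth_mktuple.
- rewrite (eq_bigr (fun pw => ((m%:R)^-1)%:E * ((pw.1)%:E * \sum_(i < m) cC f (a pw.2 i)))); last first.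
    by move=> pw _; rewrite muleCA.
  rewrite -sumeZ; last first.
    move=> pw pwin; apply: mul_ninf; first exact: w0'.
    by apply: sum_In_ninf => i _; exact: vC.
  apply: lee_wpmul2l; first by rewrite lee_fin.
  rewrite (eq_bigr (fun pw => \sum_(i < m) (pw.1)%:E * cC f (a pw.2 i))); last first.
    by move=> pw _; rewrite sumeZ // => i _; exact: vC.
  rewrite exchange_big; apply: lee_sum => i _; exact: wH.
Qed.
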